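(* Let $H$ be a finite-dimensional complex Hilbert space, $A$ a unital (real or complex) $*$-subalgebra of $\mathrm{End}_{\mathbb{C}}(H)$, $D$ a selfadjoint operator on $H$, and $J$ an antilinear isometry of $H$ with $J^2=\varepsilon 1$, $JD=\varepsilon' DJ$ for some $\varepsilon,\varepsilon'\in\{\pm1\}$, such that $[a,JbJ^{-1}]=0$ for all $a,b\in A$. With $D_0$ and $D_2$ as defined in the context, $D_0+D_2\in\Omega^1_D(A)$.
   Context: Let $A_{\mathbb{C}}$ be the complex $*$-subalgebra of $\mathrm{End}_{\mathbb{C}}(H)$ generated by $A$; write $A_{\mathbb{C}}\cong\bigoplus_{i=1}^N M_{n_i}(\mathbb{C})$ and let $P_1,\dots,P_N$ be the (orthogonal projections representing the) units of the summands, so $\sum_iP_i=1$. Set $Q_j=JP_jJ^{-1}$ and $D_{ij,kl}=P_iQ_jDP_kQ_l$. Define $D_0=\sum_{i,j,k:\,i\neq k}D_{ij,kj}$, $D_1=\sum_{i,j,l:\,j\neq l}D_{ij,il}$, $D_2=\sum_{i,j,k,l:\,i\neq k,\,j\neq l}D_{ij,kl}$, $D_R=\sum_{i,j}D_{ij,ij}$, so $D=D_0+D_1+D_2+D_R$. $\Omega^1_D(A)$ is the complex linear span in $\mathrm{End}_{\mathbb{C}}(H)$ of the operators $a[D,b]$, $a,b\in A$. *)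

(* Defs.v *)
(* H = C^n (column vectors) with the standard inner product,
   End_C(H) = 'M[C]_n, C = R[i] the complex numbers over a real field R. *)
From HB Require Import structures.
From mathcomp Require Import all_boot all_order all_algebra.
From mathcomp Require Import complex reals.
Set Implicit Arguments.
Unset Strict Implicit.
Unset Printing Implicit Defensive.
Import Order.TTheory GRing.Theory Num.Theory.
Local Open Scope ring_scope.

Section Defs.
Variables (C : numClosedFieldType) (n : nat).

Definition adjmx (X : 'M[C]_n) : 'M[C]_n := map_mx Num.conj X^T.

Definition cdot (x y : 'cV[C]_n) : C := \sum_(r < n) Num.conj (x r 0) * y r 0.

Definition opmx (f : 'cV[C]_n -> 'cV[C]_n) : 'M[C]_n :=
  \matrix_(r, c) f (delta_mx c 0) r 0.

Definition comm (X Y : 'M[C]_n) : 'M[C]_n := X *m Y - Y *m X.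

Definition cspan (S : 'M[C]_n -> Prop) (X : 'M[C]_n) : Prop :=
  exists (k : nat) (c : 'I_k -> C) (a : 'I_k -> 'M[C]_n),
    (forall m, S (a m)) /\ X = \sum_(m < k) c m *: a m.

(* unital real *-subalgebra of End_C(H) (complex ones are in particular real) *)
Definition real_star_unital_subalg (A : 'M[C]_n -> Prop) : Prop :=
  [/\ A 1%:M,
      (forall a b, A a -> A b -> A (a + b)),
      (forall (t : C) a, t \is Num.real -> A a -> A (t *: a)),
      (forall a b, A a -> A b -> A (a *m b)) &
      (forall a, A a -> A (adjmx a))].

Definition complex_star_subalg (B : 'M[C]_n -> Prop) : Prop :=
  [/\ B 0,
      (forall a b, B a -> B b -> B (a + b)),
      (forall (t : C) a, B a -> B (t *: a)),
      (forall a b, B a -> B b -> B (a *m b)) &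
      (forall a, B a -> B (adjmx a))].

(* A_C : the complex *-subalgebra generated by A (smallest one containing A) *)
Definition gen_complex_star_alg (A : 'M[C]_n -> Prop) (X : 'M[C]_n) : Prop :=
  forall B, complex_star_subalg B -> (forall a, A a -> B a) -> B X.

Definition central_proj (B : 'M[C]_n -> Prop) (P : 'M[C]_n) : Prop :=
  [/\ B P, P *m P = P, adjmx P = P & forall X, B X -> P *m X = X *m P].

(* minimal nonzero central projection of B; for B = A_C ~ (+)_i M_{n_i}(C)
   these are exactly the units P_i of the simple summands *)
Definition min_central_proj (B : 'M[C]_n -> Prop) (P : 'M[C]_n) : Prop :=
  [/\ central_proj B P, P != 0 &
      forall P', central_proj B P' -> P' *m P = P' -> P' = 0 \/ P' = P].

Definition Omega1 (A : 'M[C]_n -> Prop) (D : 'M[C]_n) : 'M[C]_n -> Prop :=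
  cspan (fun X => exists a b, [/\ A a, A b & X = a *m comm D b]).

Variables (J Jinv : 'cV[C]_n -> 'cV[C]_n).

Definition Jconj (X : 'M[C]_n) : 'M[C]_n := opmx (fun x => J (X *m Jinv x)).

Variables (N : nat) (P : 'I_N -> 'M[C]_n) (D : 'M[C]_n).

Definition Qp (j : 'I_N) : 'M[C]_n := Jconj (P j).

Definition Dc (i j k l : 'I_N) : 'M[C]_n := P i *m Qp j *m D *m P k *m Qp l.

Definition D0 : 'M[C]_n :=
  \sum_(i < N) \sum_(j < N) \sum_(k < N | i != k) Dc i j k j.

Definition D2 : 'M[C]_n :=
  \sum_(i < N) \sum_(j < N) \sum_(k < N) \sum_(l < N | (i != k) && (j != l))
    Dc i j k l.

End Defs.

(* Main.v *)
Require Import Defs.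
From HB Require Import structures.
From mathcomp Require Import all_boot all_order all_algebra.
From mathcomp Require Import complex reals.
Import Order.TTheory GRing.Theory Num.Theory.
Local Open Scope ring_scope.

Section Helpers.
Variables (C : numClosedFieldType) (n : nat).
Implicit Types (S : 'M[C]_n -> Prop) (X Y : 'M[C]_n).

Lemma cspan0 S : cspan S 0.
Proof.
exists 0%N, (fun _ => 0), (fun _ => 0); split; first by case.
by rewrite big_ord0.
Qed.

Lemma cspan1 S X : S X -> cspan S X.
Proof.
move=> hX; exists 1%N, (fun _ => 1), (fun _ => X); split => //.
by rewrite big_ord1 scale1r.
Qed.

Lemma cspanD S X Y : cspan S X -> cspan S Y -> cspan S (X + Y).
Proof.
move=> [k1 [c1 [a1 [h1 ->]]]] [k2 [c2 [a2 [h2 ->]]]].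
exists (k1 + k2)%N,
  (fun m => match split m with inl a => c1 a | inr b => c2 b end),
  (fun m => match split m with inl a => a1 a | inr b => a2 b end).
split; first by move=> m; case: (split m).
rewrite big_split_ord /=; congr (_ + _); apply: eq_bigr => i _.
  by rewrite -[lshift _ _]/(unsplit (inl _ i)) unsplitK.
by rewrite -[rshift _ _]/(unsplit (inr _ i)) unsplitK.
Qed.

Lemma cspanZ S t X : cspan S X -> cspan S (t *: X).
Proof.
move=> [k [c [a [h ->]]]]; exists k, (fun m => t * c m), a; split => //.
by rewrite scaler_sumr; apply: eq_bigr => m _; rewrite scalerA.
Qed.

Lemma cspan_sum S k (F : 'I_k -> 'M[C]_n) :
  (forall m, cspan S (F m)) -> cspan S (\sum_(m < k) F m).
Proof.
move=> hF; elim/big_rec: _; first exact: cspan0.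
by move=> i x _ hx; apply: cspanD.
Qed.

Lemma lin_sum (f : 'M[C]_n -> 'M[C]_n) (g : C -> C) k (c : 'I_k -> C) a :
  f 0 = 0 -> (forall x y, f (x + y) = f x + f y) ->
  (forall t x, f (t *: x) = g t *: f x) ->
  f (\sum_(m < k) c m *: a m) = \sum_(m < k) g (c m) *: f (a m).
Proof.
move=> f0 fD fZ.
apply: (big_rec2 (fun x y => f x = y)) => // m y1 y2 _ <-.
by rewrite fD fZ.
Qed.

Lemma cspan_star (A : 'M[C]_n -> Prop) :
  real_star_unital_subalg A -> complex_star_subalg (cspan A).
Proof.
move=> [A1 AD AZ AM Aadj]; split.
- exact: cspan0.
- by move=> a b; apply: cspanD.
- by move=> t a; apply: cspanZ.
- move=> X Y [k [c [a [ha ->]]]] hY.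
  rewrite (lin_sum (fun X => X *m Y) id); first last.
  + by move=> t x /=; rewrite -scalemxAl.
  + by move=> x y /=; rewrite mulmxDl.
  + by rewrite /= mul0mx.
  apply: cspan_sum => m; apply: cspanZ.
  case: hY => [k' [d [b [hb ->]]]].
  rewrite (lin_sum (mulmx (a m)) id); first last.
  + by move=> t x /=; rewrite -scalemxAr.
  + by move=> x y /=; rewrite mulmxDr.
  + by rewrite /= mulmx0.
  apply: cspan_sum => m'; apply: cspanZ; apply: cspan1; exact: AM.
- move=> X [k [c [a [ha ->]]]].
  rewrite (lin_sum (@adjmx C n) Num.conj).
  + apply: cspan_sum => m; apply: cspanZ; apply: cspan1; exact: Aadj.
  + by apply/matrixP => r s; rewrite !mxE rmorph0.
  + by move=> x y; apply/matrixP => r s; rewrite !mxE rmorphD.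
  + by move=> t x; apply/matrixP => r s; rewrite !mxE rmorphM.
Qed.

End Helpers.
Arguments lin_sum {C n}.
Arguments cspan_star {C n}.
Arguments cspan0 {C n}.
Arguments cspan1 {C n}.
Arguments cspanD {C n}.
Arguments cspanZ {C n}.
Arguments cspan_sum {C n}.

Theorem lemma6 (R : realType) (n : nat)
    (A : 'M[R[i]]_n -> Prop) (D : 'M[R[i]]_n)
    (J Jinv : 'cV[R[i]]_n -> 'cV[R[i]]_n) (eps eps' : R[i])
    (N : nat) (P : 'I_N -> 'M[R[i]]_n) :
  real_star_unital_subalg A ->
  adjmx D = D ->
  (* J : antilinear isometry of H, with inverse Jinv *)
  (forall x y, J (x + y) = J x + J y) ->
  (forall (c : R[i]) x, J (c *: x) = Num.conj c *: J x) ->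
  (forall x, cdot (J x) (J x) = cdot x x) ->
  cancel J Jinv -> cancel Jinv J ->
  (eps = 1 \/ eps = -1) -> (eps' = 1 \/ eps' = -1) ->
  (forall x, J (J x) = eps *: x) ->
  (forall x, J (D *m x) = eps' *: (D *m J x)) ->
  (forall a b, A a -> A b -> comm a (Jconj J Jinv b) = 0) ->
  (* P_1, ..., P_N : the units of the simple summands of A_C *)
  (forall i, min_central_proj (gen_complex_star_alg A) (P i)) ->
  \sum_(i < N) P i = 1%:M ->
  Omega1 A D (D0 J Jinv P D + D2 J Jinv P D).
Proof.
move=> hA _ J_add _ _ _ JK _ _ _ _ _ hP hsum.
have Bstar := cspan_star A hA.
have PB : forall k, cspan A (P k).
  move=> k; case: (hP k) => [[hPB _ _ _] _ _]; apply: hPB => // a ha.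
  exact: cspan1.
have Pid : forall k, P k *m P k = P k.
  by move=> k; case: (hP k) => [[_ Pid _ _] _ _].
have Om : forall a b, cspan A a -> cspan A b -> Omega1 A D (a *m comm D b).
  move=> a b [k [c [a' [ha ->]]]] [k' [d [b' [hb ->]]]].
  have cZ : forall t x, comm D (t *: x) = t *: comm D x.
    by move=> t x; rewrite /comm -scalemxAr -scalemxAl scalerBr.
  have cD : forall x y, comm D (x + y) = comm D x + comm D y.
    by move=> x y; rewrite /comm mulmxDr mulmxDl opprD addrACA.
  have c0 : comm D 0 = 0 by rewrite /comm mulmx0 mul0mx subrr.
  rewrite (lin_sum (fun X => X *m comm D (\sum_(m < k') d m *: b' m))
                   id); first last.
  + by move=> t x /=; rewrite -scalemxAl.
  + by move=> x y /=; rewrite mulmxDl.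
  + by rewrite /= mul0mx.
  apply: cspan_sum => m; apply: cspanZ.
  rewrite (lin_sum (fun X => a' m *m comm D X) id); first last.
  + by move=> t x /=; rewrite cZ -scalemxAr.
  + by move=> x y /=; rewrite cD mulmxDr.
  + by rewrite /= c0 mulmx0.
  apply: cspan_sum => m'; apply: cspanZ; apply: cspan1.
  by exists (a' m), (b' m').
have J0 : J 0 = 0.
  have h := J_add 0 0; rewrite addr0 in h.
  by apply: (addrI (J 0)); rewrite addr0 -h.
have JcD : forall X Y, Jconj J Jinv (X + Y) = Jconj J Jinv X + Jconj J Jinv Y.
  by move=> X Y; apply/matrixP => r c; rewrite /Jconj /opmx !mxE mulmxDl J_add !mxE.
have Jc0 : Jconj J Jinv 0 = 0.
  by apply/matrixP => r c; rewrite /Jconj /opmx !mxE mul0mx J0 !mxE.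
have Jc1 : Jconj J Jinv 1%:M = 1%:M.
  apply/matrixP => r c; rewrite /Jconj /opmx !mxE mul1mx JK !mxE eqxx andbT.
  by case: (r == c).
have Qsum : \sum_(j < N) Qp J Jinv P j = 1%:M.
  rewrite /Qp -Jc1 -hsum.
  apply: (big_rec2 (fun x y => x = Jconj J Jinv y)).
    by rewrite Jc0.
  by move=> m y1 y2 _ ->; rewrite JcD.
have E1 : forall i j k, \sum_(l < N) Dc J Jinv P D i j k l
                        = P i *m Qp J Jinv P j *m D *m P k.
  by move=> i j k; rewrite /Dc -mulmx_sumr Qsum mulmx1.
have E2 : forall i k, \sum_(j < N) \sum_(l < N) Dc J Jinv P D i j k l
                      = P i *m D *m P k.
  move=> i k; under eq_bigr do rewrite E1.
  by rewrite -!mulmx_suml -mulmx_sumr Qsum mulmx1.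
have E3 : D0 J Jinv P D + D2 J Jinv P D =
   \sum_(i < N) \sum_(k < N) (if i != k then P i *m D *m P k else 0).
  rewrite /D0 /D2 -big_split; apply: eq_bigr => i _.
  transitivity (\sum_(j < N) \sum_(k < N)
     (if i != k then \sum_(l < N) Dc J Jinv P D i j k l else 0)).
    rewrite -big_split; apply: eq_bigr => j _.
    rewrite big_mkcond -big_split; apply: eq_bigr => k _ /=.
    case: ifP => ik /=.
      rewrite [RHS](bigD1 j) //=; congr (_ + _); apply: eq_bigl => l.
      by rewrite eq_sym.
    by rewrite big_pred0 ?addr0.
  rewrite exchange_big; apply: eq_bigr => k _; case: ifP => ik.
    by rewrite E2.
  by rewrite big1.
have E4 : \sum_(i < N) \sum_(k < N) (if i != k then P i *m D *m P k else 0)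
          = \sum_(k < N) (1%:M - P k) *m comm D (P k).
  rewrite exchange_big; apply: eq_bigr => k _.
  rewrite -big_mkcond /= -!mulmx_suml.
  have -> : \sum_(i < N | i != k) P i = 1%:M - P k.
    by rewrite -hsum [in RHS](bigD1 k) //= addrAC subrr add0r.
  have Hz : (1%:M - P k) *m P k = 0 by rewrite mulmxBl mul1mx Pid subrr.
  by rewrite /comm mulmxBr !mulmxA Hz mul0mx subr0.
rewrite E3 E4; apply: cspan_sum => k; apply: Om => //.
rewrite -scaleN1r; apply: cspanD; first by apply: cspan1; case: hA.
by apply: cspanZ.
Qed.
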